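(* Let $\mathbf{W}=\langle W;\to,\neg,{}^{+},{}^{-},1\rangle$ be a quasi-Wajsberg* algebra and $\tau$ the congruence on $\mathbf{W}$ defined by $\langle x,y\rangle\in\tau$ iff $x=y$ or $x,y\in R(W)$. Then the quotient $\mathbf{W}/\tau$ is a flat quasi-Wajsberg* algebra.
   Context: A quasi-Wajsberg* algebra is an algebra $\langle W;\to,\neg,{}^{+},{}^{-},1\rangle$ of type $\langle2,1,1,1,0\rangle$ such that for all $x,y,z\in W$: (QW*1) $x\to y=\neg y\to\neg x$; (QW*2) $(x\to 1)\to((y\to 1)\to z)=(y\to 1)\to((x\to 1)\to z)$; (QW*3) $(1\to x)\to 1=1$; (QW*4) $(z\to z)\to(x\to y)=x\to y$; (QW*5) $(1\to 1)\to x^{+}=((1\to 1)\to x)^{+}=(x\to 1)\to 1$ and $(1\to 1)\to x^{-}=((1\to 1)\to x)^{-}=(x\to\neg 1)\to\neg 1$; (QW*6) $x\to y=(y^{+}\to x^{-})\to(x^{+}\to y^{-})$; (QW*7) $\neg(x\to y)=y\to x$; (QW*8) $\neg\neg x=x$; (QW*9) $(x\to(\neg x\to y))^{+}=x^{+}\to(\neg x^{+}\to y^{+})$; (QW*10) $x\vee y=y\vee x$; (QW*11) $x\vee(y\vee z)=(x\vee y)\vee z$; (QW*12) $x\to(y\vee z)=(x\to y)\vee(x\to z)$; where $x\vee y:=((x^{+}\to y^{+})^{+}\to(\neg x)^{-})\to((y^{-}\to x^{-})^{-}\to x^{-})$. Conventions: ${}^+,{}^-$ bind tighter than $\neg$,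 which binds tighter than $\to$. Put $0:=1\to 1$ and $R(W):=\{x\in W:0\to x=x\}$. The quotient $\mathbf{W}/\tau$ has the induced operations $(x/\tau)\to(y/\tau)=(x\to y)/\tau$, $\neg(x/\tau)=(\neg x)/\tau$, $(x/\tau)^{+}=x^{+}/\tau$, $(x/\tau)^{-}=x^{-}/\tau$ and constant $1/\tau$. A quasi-Wajsberg* algebra is flat if it satisfies $0=1$, i.e. $1\to 1=1$. *)

(* Defs.v *)
Section QW.
Variable W : Type.
Variables (imp : W -> W -> W) (neg plus minus : W -> W) (one : W).

Definition qw_join (x y : W) : W :=
  imp (imp (plus (imp (plus x) (plus y))) (minus (neg x)))
      (imp (minus (imp (minus y) (minus x))) (minus x)).

Definition is_QWstar : Prop :=
  (forall x y, imp x y = imp (neg y) (neg x)) /\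
  (forall x y z, imp (imp x one) (imp (imp y one) z)
                 = imp (imp y one) (imp (imp x one) z)) /\
  (forall x, imp (imp one x) one = one) /\
  (forall x y z, imp (imp z z) (imp x y) = imp x y) /\
  (forall x, imp (imp one one) (plus x) = plus (imp (imp one one) x) /\
             plus (imp (imp one one) x) = imp (imp x one) one) /\
  (forall x, imp (imp one one) (minus x) = minus (imp (imp one one) x) /\
             minus (imp (imp one one) x) = imp (imp x (neg one)) (neg one)) /\
  (forall x y, imp x y = imp (imp (plus y) (minus x)) (imp (plus x) (minus y))) /\
  (forall x y, neg (imp x y) = imp y x) /\
  (forall x, neg (neg x) = x) /\
  (forall x y, plus (imp x (imp (neg x) y))
               = imp (plus x) (imp (neg (plus x)) (plus y))) /\
  (forall x y, qw_join x y = qw_join y x) /\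
  (forall x y z, qw_join x (qw_join y z) = qw_join (qw_join x y) z) /\
  (forall x y z, imp x (qw_join y z) = qw_join (imp x y) (imp x z)).

Definition qw_zero : W := imp one one.
Definition in_R (x : W) : Prop := imp qw_zero x = x.

Definition tau (x y : W) : Prop := x = y \/ (in_R x /\ in_R y).

Definition is_flat : Prop := imp one one = one.
End QW.

Arguments qw_join {W}.
Arguments is_QWstar {W}.
Arguments qw_zero {W}.
Arguments in_R {W}.
Arguments tau {W}.
Arguments is_flat {W}.

Definition is_hom {W Q : Type}
  (imp : W -> W -> W) (neg plus minus : W -> W) (one : W)
  (impQ : Q -> Q -> Q) (negQ plusQ minusQ : Q -> Q) (oneQ : Q) (pi : W -> Q) : Prop :=
  (forall x y, pi (imp x y) = impQ (pi x) (pi y)) /\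
  (forall x, pi (neg x) = negQ (pi x)) /\
  (forall x, pi (plus x) = plusQ (pi x)) /\
  (forall x, pi (minus x) = minusQ (pi x)) /\
  pi one = oneQ.

(* Main.v *)
Require Import Defs.
From Stdlib Require Import ClassicalEpsilon ProofIrrelevance.

Definition rep {W : Type} (imp : W -> W -> W) (one : W) (x : W) : W :=
  if excluded_middle_informative (in_R imp one x) then one else x.

Theorem proposition4p4 (W : Type)
  (imp : W -> W -> W) (neg plus minus : W -> W) (one : W)
  (HW : is_QWstar imp neg plus minus one) :
  exists (Q : Type) (impQ : Q -> Q -> Q) (negQ plusQ minusQ : Q -> Q) (oneQ : Q)
         (pi : W -> Q),
    (forall q : Q, exists x : W, pi x = q) /\
    (forall x y : W, pi x = pi y <-> tau imp one x y) /\
    is_hom imp neg plus minus one impQ negQ plusQ minusQ oneQ pi /\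
    is_QWstar impQ negQ plusQ minusQ oneQ /\
    is_flat impQ oneQ.
Proof.
  pose proof HW as HW'.
  destruct HW' as [H1 [H2 [H3 [H4 [H5 [H5' [H6 [H7 [H8 [H9 [H10 [H11 H12]]]]]]]]]]]].
  assert (RI : forall a b, in_R imp one (imp a b)).
  { intros a b. unfold in_R, qw_zero. apply H4. }
  assert (Rone : in_R imp one one).
  { unfold in_R, qw_zero. apply H3. }
  assert (Rneg : forall x, in_R imp one x -> in_R imp one (neg x)).
  { intros x Hx. unfold in_R, qw_zero in Hx. rewrite <- Hx. rewrite H7. apply RI. }
  assert (Rplus : forall x, in_R imp one x -> in_R imp one (plus x)).
  { intros x Hx. unfold in_R, qw_zero in Hx. rewrite <- Hx. rewrite (proj2 (H5 x)). apply RI. }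
  assert (Rminus : forall x, in_R imp one x -> in_R imp one (minus x)).
  { intros x Hx. unfold in_R, qw_zero in Hx. rewrite <- Hx. rewrite (proj2 (H5' x)). apply RI. }
  set (r := rep imp one).
  assert (r_eq : forall x y, tau imp one x y -> r x = r y).
  { intros x y [E|[Hx Hy]]. subst; reflexivity.
    unfold r, rep. destruct (excluded_middle_informative (in_R imp one x)); try contradiction.
    destruct (excluded_middle_informative (in_R imp one y)); try contradiction. reflexivity. }
  assert (r_tau : forall x y, r x = r y -> tau imp one x y).
  { intros x y. unfold r, rep.
    destruct (excluded_middle_informative (in_R imp one x)) as [a|a];
    destruct (excluded_middle_informative (in_R imp one y)) as [b|b]; intro E.
    - right; split; assumption.
    - subst y. contradiction.
    - subst x. contradiction.
    - left; assumption. }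
  assert (tau_r : forall x, tau imp one (r x) x).
  { intros x. apply r_tau. unfold r, rep.
    destruct (excluded_middle_informative (in_R imp one x)) as [a|a].
    - destruct (excluded_middle_informative (in_R imp one one)); [reflexivity|contradiction].
    - destruct (excluded_middle_informative (in_R imp one x)); [contradiction|reflexivity]. }
  assert (r_idem : forall x, r (r x) = r x).
  { intros x. apply r_eq. apply tau_r. }
  assert (c_imp : forall x x' y y', tau imp one (imp x y) (imp x' y')).
  { intros. right. split; apply RI. }
  assert (c_neg : forall x x', tau imp one x x' -> tau imp one (neg x) (neg x')).
  { intros x x' [E|[a b]]. left; subst; reflexivity. right; split; auto. }
  assert (c_plus : forall x x', tau imp one x x' -> tau imp one (plus x) (plus x')).
  { intros x x' [E|[a b]]. left; subst; reflexivity. right; split; auto. }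
  assert (c_minus : forall x x', tau imp one x x' -> tau imp one (minus x) (minus x')).
  { intros x x' [E|[a b]]. left; subst; reflexivity. right; split; auto. }
  set (Q := {x : W | r x = x}).
  set (pi := fun x : W => (exist (fun v => r v = v) (r x) (r_idem x) : Q)).
  assert (pi_eq : forall x y, pi x = pi y <-> r x = r y).
  { intros x y; split.
    - intro E. exact (f_equal (@proj1_sig _ _) E).
    - intro E. unfold pi. apply subset_eq_compat. exact E. }
  assert (surj : forall q : Q, exists x, pi x = q).
  { intros [v p]. exists v. unfold pi. apply subset_eq_compat. exact p. }
  assert (pi_val : forall q : Q, pi (proj1_sig q) = q).
  { intros [v p]. unfold pi. apply subset_eq_compat. exact p. }
  set (impQ := fun a b : Q => pi (imp (proj1_sig a) (proj1_sig b))).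
  set (negQ := fun a : Q => pi (neg (proj1_sig a))).
  set (plusQ := fun a : Q => pi (plus (proj1_sig a))).
  set (minusQ := fun a : Q => pi (minus (proj1_sig a))).
  assert (hI : forall x y, impQ (pi x) (pi y) = pi (imp x y)).
  { intros. apply pi_eq. apply r_eq. apply c_imp. }
  assert (hN : forall x, negQ (pi x) = pi (neg x)).
  { intros. apply pi_eq. apply r_eq. apply c_neg. apply tau_r. }
  assert (hP : forall x, plusQ (pi x) = pi (plus x)).
  { intros. apply pi_eq. apply r_eq. apply c_plus. apply tau_r. }
  assert (hM : forall x, minusQ (pi x) = pi (minus x)).
  { intros. apply pi_eq. apply r_eq. apply c_minus. apply tau_r. }
  clearbody impQ negQ plusQ minusQ.
  exists Q, impQ, negQ, plusQ, minusQ, (pi one), pi.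
  split; [exact surj|].
  split.
  { intros x y. split.
    - intro E. apply r_tau. apply pi_eq. exact E.
    - intro E. apply pi_eq. apply r_eq. exact E. }
  split.
  { unfold is_hom. repeat split; intros; symmetry; auto. }
  split.
  2:{ unfold is_flat. rewrite hI. apply pi_eq. apply r_eq. right. split; auto. }
  clearbody pi. clear pi_val.
  Ltac hsimp hI hN hP hM := repeat (rewrite ?hI, ?hN, ?hP, ?hM).
  unfold is_QWstar.
  repeat split; intros;
  repeat match goal with
  | q : Q |- _ => destruct (surj q) as [? <-]; clear q
  end;
  try unfold qw_join;
  hsimp hI hN hP hM;
  apply (f_equal pi);
  first [ apply H1 | apply H2 | apply H3 | apply H4 | apply (proj1 (H5 _))
        | apply (proj2 (H5 _)) | apply (proj1 (H5' _)) | apply (proj2 (H5' _))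
        | apply H6 | apply H7 | apply H8 | apply H9 | apply H10 | apply H11 | apply H12 ].
Qed.
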